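(* Let $q\ge1$ and $t$ be integers with $0\le t<q$, and let $\mathcal{C}_{q,t}^{\mathrm{base}}=\bigcup_{i=0}^{\lfloor (q-t-1)/(t+1)\rfloor}\mathcal{S}_{q-t-i(t+1)}^q.$ Then: (a) for every $1\le j\le t!$, the code $\big(\mathcal{S}_{\mathrm{ins}}^t(\mathcal{C}_{q,t}^{\mathrm{base}})\big)_j$ is a $t$-tail-deletion-correcting code and $\big|\big(\mathcal{S}_{\mathrm{ins}}^t(\mathcal{C}_{q,t}^{\mathrm{base}})\big)_j\big|=|\mathcal{C}_{q,t}^{\mathrm{base}}|=q!\sum_{i=0}^{\lfloor (q-t-1)/(t+1)\rfloor}\frac{1}{(t+i(t+1))!};$ (b) for every $1\le j_1<j_2\le t!$, the codes $\big(\mathcal{S}_{\mathrm{ins}}^t(\mathcal{C}_{q,t}^{\mathrm{base}})\big)_{j_1}$ and $\big(\mathcal{S}_{\mathrm{ins}}^t(\mathcal{C}_{q,t}^{\mathrm{base}})\big)_{j_2}$ are disjoint; (c) if $q\not\equiv 0 \pmod{t+1}$, then $\big(\mathcal{S}_{\mathrm{ins}}^t(\mathcal{C}_{q,t}^{\mathrm{base}})\big)_1\cup\mathcal{S}_1^q$ is a $t$-tail-deletion-correcting code.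
   Context: Let $[q]=\{0,1,\dots,q-1\}$. For $1\le m\le q$, a partial permutation of length $m$ over $[q]$ is a sequence $\pi=(\pi_1,\dots,\pi_m)$ of $m$ pairwise distinct elements of $[q]$; $|\pi|=m$. Let $\mathcal{S}_m^q$ be the set of those of length $m$ and $\mathcal{S}_{\mathrm{all}}^q=\bigcup_{m=1}^{q}\mathcal{S}_m^q$. A code is any subset of $\mathcal{S}_{\mathrm{all}}^q$. Juxtaposition $\omega\pi$ denotes concatenation with $\omega$ on the left. For $\pi$ of length $m$ and integer $j\ge 0$, $\pi_{\downarrow j}=(\pi_{k+1},\dots,\pi_m)$ with $k=\min(j,m-1)$ (leftmost symbols are deleted; the last symbol is never deleted); $\mathcal{B}_{\mathrm{del}}^t(\pi)=\{\pi_{\downarrow j}:0\le j\le t\}$. A code $\mathcal{C}$ is $t$-tail-deletion-correcting if $\mathcal{B}_{\mathrm{del}}^t(\pi_1)\cap\mathcal{B}_{\mathrm{del}}^t(\pi_2)=\emptyset$ for all distinct $\pi_1,\pi_2\in\mathcal{C}$. For $\pi\in\mathcal{S}_{\mathrm{all}}^q$, $\mathcal{S}_{\mathrm{ins}}^t(\pi)$ is the set of all $\omega\pi\in\mathcal{S}_{\mathrm{all}}^q$ with $\omega$ a sequence of exactly $t$ elements of $[q]$ (entries of $\omega\pi$ pairwise distinct); if $|\pi|\le q-t$ it has $\binom{q-|\pi|}{t}t!$ elements. Its elements are listed in increasing lexicographic order and $(\mathcal{S}_{\mathrm{ins}}^t(\pi))_j$ denotes the $j$-th one. For a code $\mathcal{C}$,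 $(\mathcal{S}_{\mathrm{ins}}^t(\mathcal{C}))_j=\{(\mathcal{S}_{\mathrm{ins}}^t(\pi))_j:\pi\in\mathcal{C}\}$. *)

(* Defs.v *)
(* Partial permutations over [q] = {0..q-1} are represented as
   sequences of naturals; codes are finite lists of such sequences (set
   membership = list membership, cardinality = size of the deduplicated list). *)
From mathcomp Require Import all_boot all_order all_algebra.
Set Implicit Arguments. Unset Strict Implicit. Unset Printing Implicit Defensive.

Fixpoint allseqs (q m : nat) : seq (seq nat) :=
  if m is m'.+1 then [seq x :: s | x <- iota 0 q, s <- allseqs q m'] else [:: [::]].

Definition Sm (q m : nat) : seq (seq nat) := [seq s <- allseqs q m | uniq s].

Fixpoint lexle (s1 s2 : seq nat) : bool :=
  match s1, s2 with
  | [::], _ => true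
  | _ :: _, [::] => false
  | x :: s1', y :: s2' => (x < y) || ((x == y) && lexle s1' s2')
  end.

Definition S_ins (q t : nat) (pi : seq nat) : seq (seq nat) :=
  sort lexle [seq w ++ pi | w <- allseqs q t & uniq (w ++ pi)].

(* (S_ins^t(pi))_j, 1-indexed *)
Definition S_ins_j (q t j : nat) (pi : seq nat) : seq nat :=
  nth [::] (S_ins q t pi) j.-1.

Definition S_ins_code (q t j : nat) (C : seq (seq nat)) : seq (seq nat) :=
  [seq S_ins_j q t j pi | pi <- C].

Definition tail_del (j : nat) (pi : seq nat) : seq nat :=
  drop (minn j (size pi).-1) pi.

Definition B_del (t : nat) (pi : seq nat) : seq (seq nat) :=
  [seq tail_del j pi | j <- iota 0 t.+1].

Definition tdc (t : nat) (C : seq (seq nat)) : Prop :=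
  forall p1 p2, p1 \in C -> p2 \in C -> p1 != p2 ->
    forall s, s \in B_del t p1 -> s \in B_del t p2 -> False.

Definition card_code (C : seq (seq nat)) : nat := size (undup C).

Definition C_base (q t : nat) : seq (seq nat) :=
  flatten [seq Sm q (q - t - i * t.+1) | i <- iota 0 ((q - t - 1) %/ t.+1).+1].

(* Main.v *)
Require Import Defs.
From mathcomp Require Import all_boot all_order all_algebra.
From mathcomp Require Import zify.
Import GRing.Theory Num.Theory.

Lemma mem_allseqs q m s : s \in allseqs q m -> size s = m /\ all (fun x => x < q) s.
Proof.
elim: m s => [|m IH] s /=; first by rewrite inE => /eqP ->.
case/allpairsPdep=> x [y [xi yi ->]]; have [<- H] := IH _ yi; rewrite /= H.
by rewrite /= andbT; move: xi; rewrite mem_iota.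
Qed.

Lemma allseqs_uniq q m : uniq (allseqs q m).
Proof.
elim: m => [|m IH] //=; apply: allpairs_uniq => //; first exact: iota_uniq.
by move=> [a b] [c d] _ _ /= [-> ->].
Qed.

Lemma sumn_if (P : pred nat) c s :
  sumn [seq (if P x then 0 else c) | x <- s] = c * count (predC P) s.
Proof. by elim: s => [|x s IH] /=; [rewrite muln0|rewrite IH; case: (P x) => /=; lia]. Qed.

Lemma count_allseqs q t A : uniq A -> all (fun x => x < q) A ->
  count (fun w => uniq (w ++ A)) (allseqs q t) = (q - size A) ^_ t.
Proof.
elim: t A => [|t IH] A uA aA; first by rewrite /= uA.
rewrite /= /allpairs_dep count_flatten -map_comp.
have E : forall x, x \in iota 0 q ->
  (count (fun w => uniq (w ++ A)) \o (fun x0 => [seq x0 :: y | y <- allseqs q t])) x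
  = if x \in A then 0 else (q - (size A).+1) ^_ t.
  move=> x xq /=; rewrite count_map; move: xq; rewrite mem_iota add0n => xq.
  have -> : count (preim (cons x) (fun w => uniq (w ++ A))) (allseqs q t)
          = count (fun w => uniq (w ++ (x :: A))) (allseqs q t).
    apply: eq_count => s /=.
    rewrite -[_ && _]/(uniq (x :: s ++ A)); apply: perm_uniq.
    by rewrite perm_sym (perm_catCA s [:: x] A).
  case: ifP => xA.
    apply/eqP; rewrite -leqn0 leqNgt -has_count; apply/hasP => -[s _].
    by rewrite cat_uniq => /and3P[_ _] /=; rewrite xA.
  have xq' : x < q by case/andP: xq.
  by rewrite IH //= ?xA ?uA ?xq' ?aA.
have -> := (eq_in_map _ (fun x => if x \in A then 0 else (q - (size A).+1) ^_ t) (iota 0 q)).1 E.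
rewrite sumn_if.
have cA : count (mem A) (iota 0 q) = size A.
  rewrite -size_filter; apply: perm_size; apply: uniq_perm.
  - by rewrite filter_uniq // iota_uniq.
  - by [].
  move=> y; rewrite mem_filter mem_iota add0n /=.
  case yA: (y \in A); rewrite ?andbT ?andbF //. exact: (allP aA).
have := count_predC (mem A) (iota 0 q); rewrite cA size_iota => cC.
have -> : count (predC (mem A)) (iota 0 q) = q - size A by lia.
case E2: (q - size A) => [|n]; first by rewrite muln0.
by rewrite ffactSS mulnC; congr (_ * _); congr (_ ^_ _); lia.
Qed.

Lemma size_Sm q m : size (Sm q m) = q ^_ m.
Proof.
rewrite size_filter -[q in RHS]subn0 -(count_allseqs q m [::] isT isT).
by apply: eq_count => s /=; rewrite cats0.
Qed.

Lemma Sm_uniq q m : uniq (Sm q m).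
Proof. by rewrite filter_uniq // allseqs_uniq. Qed.

Lemma mem_Sm q m s : s \in Sm q m -> [/\ uniq s, size s = m & all (fun x => x < q) s].
Proof. by rewrite mem_filter => /andP[u /mem_allseqs[-> ->]]. Qed.

Lemma flatten_map_uniq (T : eqType) (s : seq nat) (F : nat -> seq T) :
  uniq s -> (forall i, i \in s -> uniq (F i)) ->
  (forall i j x, i \in s -> j \in s -> x \in F i -> x \in F j -> i = j) ->
  uniq (flatten (map F s)).
Proof.
elim: s => [|i s IH] //= /andP[ni us] uF dF.
rewrite cat_uniq uF ?inE ?eqxx //= IH //; last first.
- by move=> a b x ai bi; apply: dF; rewrite inE ?ai ?bi orbT.
- by move=> a ai; apply: uF; rewrite inE ai orbT.
rewrite andbT; apply/hasP => -[x /flattenP[L /mapP[j js ->] xj] xi].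
have ij := dF i j x; rewrite !inE eqxx js orbT in ij.
by move: ni; rewrite (ij isT isT xi xj) js.
Qed.

Lemma mul_gap i1 i2 d : i1 * d.+1 = i2 * d.+1 \/ i1 * d.+1 + d.+1 <= i2 * d.+1 \/ i2 * d.+1 + d.+1 <= i1 * d.+1.
Proof.
case: (ltngtP i1 i2) => h.
- right; left; rewrite -mulSnr; exact: leq_mul.
- right; right; rewrite -mulSnr; exact: leq_mul.
- by left; rewrite h.
Qed.

Section Main.
Variables (q t : nat).
Hypothesis htq : t < q.
Let K := (q - t - 1) %/ t.+1.

Lemma Cbase_mem p : p \in C_base q t -> exists i,
  [/\ i * t.+1 <= q - t - 1, uniq p, all (fun x => x < q) p & size p = q - t - i * t.+1].
Proof.
case/flattenP=> L /mapP[i ii ->] /mem_Sm[u s a]; exists i; split => //.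
move: ii; rewrite mem_iota add0n ltnS => /andP[_ iK].
apply: leq_trans (leq_divM (q - t - 1) t.+1).
by rewrite leq_mul2r iK orbT.
Qed.

Lemma Cbase_uniq : uniq (C_base q t).
Proof.
apply: flatten_map_uniq; first exact: iota_uniq.
  by move=> i _; exact: Sm_uniq.
move=> i j x; rewrite !mem_iota !add0n !ltnS => /andP[_ iK] /andP[_ jK] /mem_Sm[_ s1 _] /mem_Sm[_ s2 _].
have hi : i * t.+1 <= q - t - 1.
  apply: leq_trans (leq_divM (q - t - 1) t.+1); by rewrite leq_mul2r iK orbT.
have hj : j * t.+1 <= q - t - 1.
  apply: leq_trans (leq_divM (q - t - 1) t.+1); by rewrite leq_mul2r jK orbT.
have e : i * t.+1 = j * t.+1 by lia.
by apply/eqP; rewrite -(eqn_pmul2r (ltn0Sn t)) e.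
Qed.

End Main.

Lemma Sins_size q t p : uniq p -> all (fun x => x < q) p ->
  size (S_ins q t p) = (q - size p) ^_ t.
Proof. by move=> u a; rewrite size_sort size_map size_filter count_allseqs. Qed.

Lemma Sins_uniq q t p : uniq (S_ins q t p).
Proof.
rewrite sort_uniq map_inj_in_uniq ?filter_uniq ?allseqs_uniq //.
move=> w1 w2; rewrite !mem_filter => /andP[_ /mem_allseqs[s1 _]] /andP[_ /mem_allseqs[s2 _]] e.
by have /eqP := e; rewrite eqseq_cat ?s1 ?s2 // => /andP[/eqP].
Qed.

Lemma Sins_mem q t p s : s \in S_ins q t p -> exists w, s = w ++ p /\ size w = t.
Proof.
rewrite mem_sort => /mapP[w]; rewrite mem_filter => /andP[_ /mem_allseqs[sw _]] ->.
by exists w.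
Qed.

Lemma Sins_j_spec q t j p : uniq p -> all (fun x => x < q) p -> size p + t <= q ->
  1 <= j <= t`! ->
  drop t (S_ins_j q t j p) = p /\ size (S_ins_j q t j p) = t + size p
  /\ j.-1 < size (S_ins q t p).
Proof.
move=> u a hs /andP[j1 jt].
have lt : j.-1 < size (S_ins q t p).
  rewrite Sins_size //; rewrite -bin_ffact.
  have : 0 < 'C(q - size p, t) by rewrite bin_gt0; lia.
  move=> h; apply: leq_trans (leq_pmull _ h); lia.
have [w [e sw]] := @Sins_mem q t p _ (mem_nth [::] lt).
rewrite /S_ins_j e drop_size_cat // size_cat sw; by [].
Qed.

Lemma tail_del_long k p t : t < size p -> k <= t -> tail_del k p = drop k p.
Proof. by move=> h hk; rewrite /tail_del; congr drop; lia. Qed.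

Lemma code_spec q t j p : t < q -> 1 <= j <= t`! ->
  p \in S_ins_code q t j (C_base q t) -> exists pi i,
  [/\ pi \in C_base q t, p = S_ins_j q t j pi, i * t.+1 <= q - t - 1,
      size pi = q - t - i * t.+1 & drop t p = pi /\ size p = t + size pi].
Proof.
move=> htq hj /mapP[pi pC ->].
have [i [hi u a s]] := Cbase_mem q t pi pC.
have hs : size pi + t <= q by lia.
have [d [sz _]] := Sins_j_spec q t j pi u a hs hj.
by exists pi, i; split.
Qed.

Lemma code_tdc q t j : t < q -> 1 <= j <= t`! -> tdc t (S_ins_code q t j (C_base q t)).
Proof.
move=> htq hj p1 p2 h1 h2 ne s /mapP[k1 k1i e1] /mapP[k2 k2i e2].
have [pi1 [i1 [c1 d1 hi1 s1 [dr1 sz1]]]] := code_spec q t j p1 htq hj h1.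
have [pi2 [i2 [c2 d2 hi2 s2 [dr2 sz2]]]] := code_spec q t j p2 htq hj h2.
move: k1i k2i; rewrite !mem_iota !add0n !ltnS => /andP[_ k1t] /andP[_ k2t].
rewrite (@tail_del_long _ _ t) ?sz1 in e1; [|lia|done].
rewrite (@tail_del_long _ _ t) ?sz2 in e2; [|lia|done].
have ss : size (drop k1 p1) = size (drop k2 p2) by rewrite -e1 -e2.
rewrite !size_drop sz1 sz2 in ss.
have [g|[g|g]] := mul_gap i1 i2 t; try lia.
have ek : k1 = k2 by lia.
have ep : pi1 = pi2.
  by rewrite -dr1 -dr2 -(subnK k1t) -!drop_drop -e1 ek -e2.
by move: ne; rewrite d1 d2 ep eqxx.
Qed.

Lemma card_code_ins q t j : t < q -> 1 <= j <= t`! ->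
  card_code (S_ins_code q t j (C_base q t)) = card_code (C_base q t).
Proof.
move=> htq hj; rewrite /card_code /S_ins_code !undup_id ?size_map ?Cbase_uniq //.
rewrite map_inj_in_uniq ?Cbase_uniq // => p1 p2 c1 c2 e.
have [i1 [_ u1 a1 s1]] := Cbase_mem q t p1 c1.
have [i2 [_ u2 a2 s2]] := Cbase_mem q t p2 c2.
have h1 : size p1 + t <= q by lia.
have h2 : size p2 + t <= q by lia.
have [d1 _] := Sins_j_spec q t j p1 u1 a1 h1 hj.
have [d2 _] := Sins_j_spec q t j p2 u2 a2 h2 hj.
by rewrite -d1 -d2 e.
Qed.

Lemma card_Cbase q t : t < q ->
  ((card_code (C_base q t))%:R : rat) =
       (\sum_(i < ((q - t - 1) %/ t.+1).+1)
          ((q`!)%:R / ((t + i * t.+1)`!)%:R))%R.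
Proof.
move=> htq; rewrite /card_code undup_id ?Cbase_uniq // /C_base size_flatten /shape.
rewrite -map_comp sumnE big_map natr_sum -(big_mkord xpredT (fun i => (q`!)%:R / ((t + i * t.+1)`!)%:R)%R).
rewrite /index_iota subn0; apply: eq_big_seq => i; rewrite mem_iota add0n ltnS => /andP[_ iK] /=.
have hi : i * t.+1 <= q - t - 1.
  apply: leq_trans (leq_divM (q - t - 1) t.+1); by rewrite leq_mul2r iK orbT.
rewrite size_Sm.
have e : q - (q - t - i * t.+1) = t + i * t.+1 by lia.
have hm : q - t - i * t.+1 <= q by lia.
have ff := ffact_fact hm; rewrite e in ff.
by rewrite -ff natrM mulfK // pnatr_eq0 -lt0n fact_gt0.
Qed.

Lemma code_disj q t j1 j2 : t < q -> 1 <= j1 -> j1 < j2 -> j2 <= t`! ->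
     forall s, s \in S_ins_code q t j1 (C_base q t) ->
               s \in S_ins_code q t j2 (C_base q t) -> False.
Proof.
move=> htq h1 h12 h2 s /mapP[p1 c1 e1] /mapP[p2 c2 e2].
have [i1 [_ u1 a1 s1]] := Cbase_mem q t p1 c1.
have [i2 [_ u2 a2 s2]] := Cbase_mem q t p2 c2.
have hs1 : size p1 + t <= q by lia.
have hs2 : size p2 + t <= q by lia.
have hj1 : 1 <= j1 <= t`! by apply/andP; split => //; lia.
have hj2 : 1 <= j2 <= t`! by apply/andP; split => //; lia.
have [d1 [_ l1]] := Sins_j_spec q t j1 p1 u1 a1 hs1 hj1.
have [d2 [_ l2]] := Sins_j_spec q t j2 p2 u2 a2 hs2 hj2.
have ep : p1 = p2 by rewrite -d1 -d2 -e1 -e2.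
subst p2.
have := nth_uniq [::] l1 l2 (Sins_uniq q t p1).
rewrite /S_ins_j in e1 e2; rewrite -e1 -e2 eqxx => /esym/eqP; lia.
Qed.

Lemma Bdel_single q t p s : p \in Sm q 1 -> s \in B_del t p -> s = p.
Proof.
move=> /mem_Sm[_ sp _] /mapP[k _ ->].
by rewrite /tail_del sp minn0 drop0.
Qed.

Lemma code1_long q t p s : t < q -> ~~ (t.+1 %| q) ->
  p \in S_ins_code q t 1 (C_base q t) -> s \in B_del t p -> 2 <= size s.
Proof.
move=> htq nd hp /mapP[k ki ->].
have hj : 1 <= 1 <= t`! by rewrite leqnn fact_gt0.
have [pi [i [c d hi s1 [dr sz]]]] := code_spec q t 1 p htq hj hp.
move: ki; rewrite mem_iota add0n ltnS => /andP[_ kt].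
rewrite (@tail_del_long _ _ t) ?sz; [|lia|done].
rewrite size_drop sz.
have : size pi != 1.
  apply/negP => /eqP e1; move/negP: nd; apply.
  rewrite (_ : q = i.+1 * t.+1); first exact: dvdn_mull.
  lia.
lia.
Qed.

Lemma code1_tdc q t : t < q -> ~~ (t.+1 %| q) ->
  tdc t (S_ins_code q t 1 (C_base q t) ++ Sm q 1).
Proof.
move=> htq nd p1 p2; rewrite !mem_cat => /orP[h1|h1] /orP[h2|h2] ne s b1 b2.
- have hj : 1 <= 1 <= t`! by rewrite leqnn fact_gt0.
  exact: (code_tdc q t 1 htq hj p1 p2 h1 h2 ne s b1 b2).
- have := code1_long q t p1 s htq nd h1 b1.
  have -> := Bdel_single q t p2 s h2 b2.
  by case/mem_Sm: h2 => _ -> _.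
- have := code1_long q t p2 s htq nd h2 b2.
  have -> := Bdel_single q t p1 s h1 b1.
  by case/mem_Sm: h1 => _ -> _.
- have e1 := Bdel_single q t p1 s h1 b1.
  have e2 := Bdel_single q t p2 s h2 b2.
  by move: ne; rewrite -e1 -e2 eqxx.
Qed.

Theorem mainTheorem9 (q t : nat) (hq : 1 <= q) (htq : t < q) :
  (forall j, 1 <= j <= t`! ->
     tdc t (S_ins_code q t j (C_base q t)) /\
     card_code (S_ins_code q t j (C_base q t)) = card_code (C_base q t) /\
     ((card_code (C_base q t))%:R : rat) =
       (\sum_(i < ((q - t - 1) %/ t.+1).+1)
          ((q`!)%:R / ((t + i * t.+1)`!)%:R))%R) /\
  (forall j1 j2, 1 <= j1 -> j1 < j2 -> j2 <= t`! ->
     forall s, s \in S_ins_code q t j1 (C_base q t) ->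
               s \in S_ins_code q t j2 (C_base q t) -> False) /\
  (~~ (t.+1 %| q) -> tdc t (S_ins_code q t 1 (C_base q t) ++ Sm q 1)).
Proof.
split; last split.
- move=> j hj; split; first exact: code_tdc.
  by split; [exact: card_code_ins | exact: card_Cbase].
- by move=> j1 j2 h1 h12 h2; apply: code_disj.
- exact: code1_tdc.
Qed.
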